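(* Fix a target task and the data below, let $\mathcal{S}\subset\mathcal{P}(\mathcal{X}_S)\times A_S$ be a set of source tasks, and for $(\mu,f)\in\mathcal{S}$ let $$\mathcal{C}(\mu,f):=\inf_{T_0^X\in\mathbb{T}_0^X,\;T_0^Y\in\mathbb{T}_0^Y} C\Big(\mathcal{E}^O\big(T_0^Y(\cdot,f(T_0^X(\cdot)))\big),\;D\big(T_0^X\#\mathrm{Law}(X_T),\mu\big)\Big).$$ Assume there is $L_Y>0$ such that for every $T_0^Y\in\mathbb{T}_0^Y$, $\|T_0^Y(x_1,y_1)-T_0^Y(x_2,y_2)\|_{\mathcal{Y}_T}\le L_Y(\|x_1-x_2\|_{\mathcal{X}_T}+\|y_1-y_2\|_{\mathcal{Y}_S})$ for all $(x_1,y_1),(x_2,y_2)\in\mathcal{X}_T\times\mathcal{Y}_S$, and there are $L'>0$, $p\ge1$ with $|\mathcal{E}^O(h_1)-\mathcal{E}^O(h_2)|\le L'\,\mathcal{W}_p(h_1\#\mathrm{Law}(X_T),h_2\#\mathrm{Law}(X_T))^p$ for all intermediate models $h_1,h_2$, i.e. all functions $x\mapsto T_0^Y(x,f(T_0^X(x)))$ with $f\in A_S$, $T_0^X\in\mathbb{T}_0^X$, $T_0^Y\in\mathbb{T}_0^Y$. Then $\mathcal{C}$ is continuous on the metric space $(\mathcal{S},d_S)$, where $d_S((\mu_1,f_1),(\mu_2,f_2)):=D(\mu_1,\mu_2)+d_M(f_1,f_2)$.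
   Context: $(\mathcal{X}_T,\|\cdot\|_{\mathcal{X}_T})$, $(\mathcal{Y}_T,\|\cdot\|_{\mathcal{Y}_T})$, $(\mathcal{X}_S,\|\cdot\|_{\mathcal{X}_S})$, $(\mathcal{Y}_S,\|\cdot\|_{\mathcal{Y}_S})$ are Banach spaces; $X_T$ is an $\mathcal{X}_T$-valued random variable. $A_S$ is a set of functions $\mathcal{X}_S\to\mathcal{Y}_S$, $A_T$ a set of functions $\mathcal{X}_T\to\mathcal{Y}_T$. $\mathbb{T}_0^X$ is a nonempty set of maps $\mathcal{X}_T\to\mathcal{X}_S$ and $\mathbb{T}_0^Y$ a nonempty set of maps $\mathcal{X}_T\times\mathcal{Y}_S\to\mathcal{Y}_T$ such that all intermediate models lie in $A_T$. $\mathcal{E}^O:A_T\to[0,\infty)$ is an output transport risk. $D$ is a metric on the set $\mathcal{P}(\mathcal{X}_S)$ of probability measures on $\mathcal{X}_S$ (the input transport risk of $T_0^X$ is $D(T_0^X\#\mathrm{Law}(X_T),\mu)$), and $\#$ denotes pushforward. $C:\mathbb{R}\times\mathbb{R}\to\mathbb{R}$ satisfies $C(0,0)=0$, is non-decreasing in each argument, and there is $L>0$ with $|C(a,b)-C(a',b')|\le L(|a-a'|+|b-b'|)$ for all $a,a',b,b'\ge0$. For a fixed constant $M>0$, $d_M(f_1,f_2):=\min\{M,\sup_{x\in\mathcal{X}_S}\|f_1(x)-f_2(x)\|_{\mathcal{Y}_S}\}$. $\mathcal{W}_p$ is the $p$-Wasserstein distance on probability measures on $\mathcal{Y}_T$ with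 respect to $\|\cdot\|_{\mathcal{Y}_T}$. *)

(* Defs.v *)
From HB Require Import structures.
From mathcomp Require Import all_boot all_order all_algebra.
From mathcomp Require Import all_classical all_reals all_analysis.
Set Implicit Arguments. Unset Strict Implicit. Unset Printing Implicit Defensive.
Import Order.TTheory GRing.Theory Num.Theory numFieldNormedType.Exports.
Local Open Scope classical_set_scope.
Local Open Scope ring_scope.

Definition Borel (T : topologicalType) := g_sigma_algebraType (@open T).

Definition is_prob (d : measure_display) (T : measurableType d) (R : realType)
  (m : set T -> \bar R) : Prop :=
  exists Q : probability T R, (Q : set T -> \bar R) = m.

Definition Prob (d : measure_display) (T : measurableType d) (R : realType) :
  set (set T -> \bar R) := [set m | is_prob m].

Definition is_metric_on (U : Type) (R : realType) (A : set U) (D : U -> U -> R) :=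
  [/\ forall x y, A x -> A y -> 0 <= D x y,
      forall x y, A x -> A y -> (D x y = 0 <-> x = y),
      forall x y, A x -> A y -> D x y = D y x &
      forall x y z, A x -> A y -> A z -> D x z <= D x y + D y z].

Definition couplings (R : realType) (Y : normedModType R)
  (nu1 nu2 : set (Borel Y) -> \bar R) : set (probability (Borel Y * Borel Y)%type R) :=
  [set pi | (forall A, measurable A -> pi (fst @^-1` A) = nu1 A) /\
            (forall A, measurable A -> pi (snd @^-1` A) = nu2 A)].

Definition Wasserstein (R : realType) (Y : normedModType R) (p : R)
  (nu1 nu2 : set (Borel Y) -> \bar R) : \bar R :=
  ((ereal_inf [set \int[pi]_z ((`|(z.1 : Y) - (z.2 : Y)| `^ p)%:E)
               | pi in couplings nu1 nu2]) `^ p^-1)%E.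

Definition dM (R : realType) (XS YS : normedModType R) (M : R) (f1 f2 : XS -> YS) : R :=
  fine (Order.min M%:E (ereal_sup [set (`|f1 x - f2 x|)%:E | x in [set: XS]])).
Arguments Prob {d} T R.

(* Main.v *)
Require Import Defs.
From HB Require Import structures.
From mathcomp Require Import all_boot all_order all_algebra.
From mathcomp Require Import all_classical all_reals all_analysis.
From mathcomp Require Import lra.
Import Order.TTheory GRing.Theory Num.Theory numFieldNormedType.Exports.
Local Open Scope classical_set_scope.
Local Open Scope ring_scope.
Import HBNNSimple.
Lemma wass_bound (R : realType) (d : measure_display) (T : measurableType d)
  (Y : normedModType R) (mu : probability T R) (h1 h2 : T -> Borel Y)
  (m1 : measurable_fun setT h1) (m2 : measurable_fun setT h2) (K p : R) :
  0 <= K -> 0 < p -> (forall x, `|(h1 x : Y) - h2 x| <= K) ->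
  (Wasserstein p (pushforward mu h1) (pushforward mu h2) `^ p <= (K `^ p)%:E)%E.
Proof.
move=> K0 p0 hK.
have mphi : measurable_fun setT (fun x => (h1 x, h2 x)) by exact: measurable_fun_pair.
pose phi : {mfun T >-> (Borel Y * Borel Y)%type} := HB.pack (fun x => (h1 x, h2 x))
  (isMeasurableFun.Build _ _ _ _ _ mphi).
rewrite /Wasserstein; set F := (X in ereal_inf X).
have F0 : forall x, F x -> (0 <= x)%E.
  move=> _ [pi _ <-]; apply: integral_ge0 => z _; rewrite lee_fin; exact: powR_ge0.
have I0 : (0 <= ereal_inf F)%E by apply: le_ereal_inf_tmp => x /F0.
rewrite -poweRrM mulVf ?gt_eqF // poweRe1 //.
apply: ge_ereal_inf.
pose mu' : probability _ R := distribution mu phi.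
exists (\int[mu']_z ((`|(z.1 : Y) - (z.2 : Y)| `^ p)%:E))%E.
  exists mu' => //; split => A mA //.
rewrite ge0_integralTE; last by move=> z; rewrite lee_fin powR_ge0.
apply: ge_ereal_sup => _ [g /= gle <-].
have -> : sintegral mu' g = (\int[mu']_(z in setT) (g z)%:E)%E.
  by rewrite integral_nnsfun // patch_setT.
rewrite (@ge0_integral_pushforward _ _ _ _ R _ mphi mu setT (fun z => (g z)%:E)) //; first last.
- by move=> z _; rewrite lee_fin.
- by apply/measurable_realfun.measurable_EFinP; exact: measurable_funP.
rewrite preimage_setT.
apply: (@le_trans _ _ (\int[mu]_(x in setT) (K `^ p)%:E)%E).
  apply: ge0_le_integral => //.
  - by move=> x _; rewrite lee_fin.
  - apply/measurable_realfun.measurable_EFinP; apply: measurableT_comp => //; exact: measurable_funP.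
  move=> x _ /=; apply: (le_trans (gle (h1 x, h2 x))); rewrite lee_fin.
  by apply: ge0_ler_powR => //; [exact: ltW | exact: normr_ge0 | exact: hK].
rewrite integral_cst //.
rewrite -[leRHS]mule1; apply: lee_wpmul2l; first by rewrite lee_fin powR_ge0.
exact: probability_le1.
Qed.
Lemma inf_close (R : realType) (U V : set R) (B : R) :
  U !=set0 -> V !=set0 -> (forall u, U u -> 0 <= u) -> (forall v, V v -> 0 <= v) ->
  (forall u, U u -> exists2 v, V v & v <= u + B) ->
  (forall v, V v -> exists2 u, U u & u <= v + B) ->
  `|inf U - inf V| <= B.
Proof.
move=> U0 V0 Up Vp UV VU.
have hU : has_lbound U by exists 0 => u /Up.
have hV : has_lbound V by exists 0 => v /Vp.
have h1 : inf V - B <= inf U.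
  apply: lb_le_inf => // u /UV [v Vv vu].
  have := ge_inf hV Vv; lra.
have h2 : inf U - B <= inf V.
  apply: lb_le_inf => // v /VU [u Uu uv].
  have := ge_inf hU Uu; lra.
rewrite ler_norml; apply/andP; split; lra.
Qed.

Lemma dM_ge0 (R : realType) (XS YS : normedModType R) (M : R) (f1 f2 : XS -> YS) :
  0 < M -> 0 <= dM M f1 f2.
Proof.
move=> M0; rewrite /dM; apply: fine_ge0; rewrite le_min lee_fin (ltW M0) /=.
apply: (@le_trans _ _ (`|f1 0 - f2 0|)%:E); first by rewrite lee_fin.
by apply: ereal_sup_ubound; exists 0.
Qed.

Lemma dM_bound (R : realType) (XS YS : normedModType R) (M : R) (f1 f2 : XS -> YS) :
  0 < M -> dM M f1 f2 < M -> forall x, `|f1 x - f2 x| <= dM M f1 f2.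
Proof.
move=> M0; rewrite /dM.
set s := ereal_sup _.
have s0 : (0 <= s)%E.
  apply: (@le_trans _ _ (`|f1 0 - f2 0|)%:E); first by rewrite lee_fin.
  by apply: ereal_sup_ubound; exists 0.
case: (leP M%:E s) => hs.
  by rewrite /= ltxx.
move=> _ x.
have : s \is a fin_num by rewrite ge0_fin_numE // (lt_trans hs) // ltry.
move=> /fineK sE.
rewrite -lee_fin sE; apply: ereal_sup_ubound; by exists x.
Qed.
Theorem proposition8 (R : realType)
  (XT YT XS YS : completeNormedModType R)
  (dO : measure_display) (Om : measurableType dO) (P : probability Om R)
  (X_T : Om -> XT) (mX : measurable_fun [set: Om] (X_T : Om -> Borel XT))
  (A_S : set (XS -> YS)) (A_T : set (XT -> YT))
  (TX : set (XT -> XS)) (TY : set (XT -> YS -> YT))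
  (hTX0 : TX !=set0) (hTY0 : TY !=set0)
  (EO : (XT -> YT) -> R) (D : (set (Borel XS) -> \bar R) -> (set (Borel XS) -> \bar R) -> R)
  (C : R -> R -> R) (L M LY L' p : R)
  (S : set ((set (Borel XS) -> \bar R) * (XS -> YS))) :
  let Law := pushforward P (X_T : Om -> Borel XT) in
  let IM := [set h : XT -> YT | exists f T0X T0Y, [/\ A_S f, TX T0X, TY T0Y &
                  h = (fun x => T0Y x (f (T0X x)))]] in
  let Cost (s : (set (Borel XS) -> \bar R) * (XS -> YS)) :=
    inf [set r | exists T0X T0Y, [/\ TX T0X, TY T0Y &
           r = C (EO (fun x => T0Y x (s.2 (T0X x))))
                 (D (pushforward Law (T0X : Borel XT -> Borel XS)) s.1)]] in
  let dS (s1 s2 : (set (Borel XS) -> \bar R) * (XS -> YS)) :=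
    D s1.1 s2.1 + dM M s1.2 s2.2 in
  (* well-definedness of the pushforwards *)
  (forall T0X, TX T0X -> measurable_fun [set: Borel XT] (T0X : Borel XT -> Borel XS)) ->
  (forall h, IM h -> measurable_fun [set: Borel XT] (h : Borel XT -> Borel YT)) ->
  (* standing assumptions *)
  IM `<=` A_T ->
  (forall h, A_T h -> 0 <= EO h) ->
  is_metric_on (Prob (Borel XS) R) D ->
  C 0 0 = 0 ->
  (forall a a' b, a <= a' -> C a b <= C a' b) ->
  (forall a b b', b <= b' -> C a b <= C a b') ->
  0 < L ->
  (forall a a' b b', 0 <= a -> 0 <= a' -> 0 <= b -> 0 <= b' ->
     `|C a b - C a' b'| <= L * (`|a - a'| + `|b - b'|)) ->
  0 < M ->
  S `<=` [set s | Prob (Borel XS) R s.1 /\ A_S s.2] ->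
  (* hypotheses of the proposition *)
  0 < LY ->
  (forall T0Y, TY T0Y -> forall x1 y1 x2 y2,
     `|T0Y x1 y1 - T0Y x2 y2| <= LY * (`|x1 - x2| + `|y1 - y2|)) ->
  0 < L' -> 1 <= p ->
  (forall h1 h2, IM h1 -> IM h2 ->
     (`|EO h1 - EO h2|%:E <= L'%:E *
        (Wasserstein p (pushforward Law (h1 : Borel XT -> Borel YT))
                       (pushforward Law (h2 : Borel XT -> Borel YT))) `^ p)%E) ->
  (* conclusion: Cost is continuous on the metric space (S, dS) *)
  forall s, S s -> forall e : R, 0 < e -> exists2 del : R, 0 < del &
    forall s', S s' -> dS s s' < del -> `|Cost s - Cost s'| < e.
Proof.
move=> Law IM Cost dS mTX mIM IMAT EO0 Dmet C00 Cmon1 Cmon2 L0 CLip M0 HS LY0 TYLip L'0 p1 EOW s Ss e e0.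
case: Dmet => Dge0 Deq0 Dsym Dtri.
pose mXT : {mfun Om >-> Borel XT} := HB.pack (X_T : Om -> Borel XT) (isMeasurableFun.Build _ _ _ _ _ mX).
pose Lawp : probability (Borel XT) R := distribution P mXT.
have probT : forall T0X, TX T0X -> Prob (Borel XS) R (pushforward Law (T0X : Borel XT -> Borel XS)).
  move=> T0X hT.
  pose mT : {mfun Borel XT >-> Borel XS} := HB.pack (T0X : Borel XT -> Borel XS) (isMeasurableFun.Build _ _ _ _ _ (mTX _ hT)).
  by exists (distribution Lawp mT).
have p0 : 0 < p by apply: lt_le_trans p1.
have key : forall s1 s2, S s1 -> S s2 -> dM M s1.2 s2.2 < M -> forall T0X T0Y, TX T0X -> TY T0Y ->
  `|C (EO (fun x => T0Y x (s1.2 (T0X x)))) (D (pushforward Law (T0X : Borel XT -> Borel XS)) s1.1)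
    - C (EO (fun x => T0Y x (s2.2 (T0X x)))) (D (pushforward Law (T0X : Borel XT -> Borel XS)) s2.1)|
  <= L * (L' * (LY * dM M s1.2 s2.2) `^ p + D s1.1 s2.1).
  move=> s1 s2 S1 S2 dlt T0X T0Y hX hY.
  have [P1 A1] := HS _ S1.
  have [P2 A2] := HS _ S2.
  have IM1 : IM (fun x => T0Y x (s1.2 (T0X x))) by exists s1.2, T0X, T0Y.
  have IM2 : IM (fun x => T0Y x (s2.2 (T0X x))) by exists s2.2, T0X, T0Y.
  have EOle : `|EO (fun x => T0Y x (s1.2 (T0X x))) - EO (fun x => T0Y x (s2.2 (T0X x)))|
      <= L' * (LY * dM M s1.2 s2.2) `^ p.
    rewrite -lee_fin EFinM; apply: le_trans (EOW _ _ IM1 IM2) _.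
    apply: lee_wpmul2l; first by rewrite lee_fin ltW.
    apply: (@wass_bound R _ (Borel XT) YT Lawp _ _ (mIM _ IM1) (mIM _ IM2)) => //.
      by apply: mulr_ge0; [exact: ltW | exact: dM_ge0].
    move=> x /=.
    apply: le_trans (TYLip _ hY _ _ _ _) _.
    rewrite subrr normr0 add0r; apply: ler_wpM2l; first exact: ltW.
    exact: dM_bound.
  have a1 : 0 <= EO (fun x => T0Y x (s1.2 (T0X x))) := EO0 _ (IMAT _ IM1).
  have a2 : 0 <= EO (fun x => T0Y x (s2.2 (T0X x))) := EO0 _ (IMAT _ IM2).
  have b1 := Dge0 _ _ (probT _ hX) P1.
  have b2 := Dge0 _ _ (probT _ hX) P2.
  apply: le_trans (CLip _ _ _ _ a1 a2 b1 b2) _.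
  apply: ler_wpM2l; first exact: ltW.
  apply: lerD EOle _.
  have t1 := Dtri _ _ _ (probT _ hX) P1 P2.
  have t2 := Dtri _ _ _ (probT _ hX) P2 P1.
  have t3 := Dsym _ _ P1 P2.
  rewrite ler_norml; apply/andP; split; lra.
have Cnn : forall s1, S s1 -> forall T0X T0Y, TX T0X -> TY T0Y ->
    0 <= C (EO (fun x => T0Y x (s1.2 (T0X x)))) (D (pushforward Law (T0X : Borel XT -> Borel XS)) s1.1).
  move=> s1 S1 T0X T0Y hX hY.
  have [P1 A1] := HS _ S1.
  have IM1 : IM (fun x => T0Y x (s1.2 (T0X x))) by exists s1.2, T0X, T0Y.
  have a1 : 0 <= EO (fun x => T0Y x (s1.2 (T0X x))) := EO0 _ (IMAT _ IM1).
  have b1 := Dge0 _ _ (probT _ hX) P1.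
  rewrite -C00; apply: le_trans (Cmon1 _ _ _ a1).
  exact: Cmon2.
have ne : forall s1, exists r, exists T0X T0Y, [/\ TX T0X, TY T0Y &
           r = C (EO (fun x => T0Y x (s1.2 (T0X x))))
                 (D (pushforward Law (T0X : Borel XT -> Borel XS)) s1.1)].
  move=> s1; case: hTX0 => T0X hX; case: hTY0 => T0Y hY.
  by eexists; exists T0X, T0Y; split.
pose K := L * (L' * LY + 1).
have K0 : 0 < K.
  by apply: mulr_gt0 => //; apply: ltr_wpDl => //; apply: mulr_ge0; exact: ltW.
exists (Num.min M (Num.min LY^-1 (e / K))).
  by rewrite !lt_min M0 invr_gt0 LY0 divr_gt0.
move=> s' Ss' hd.
have [P1 A1] := HS _ Ss.
have [P2 A2] := HS _ Ss'.
have D0 := Dge0 _ _ P1 P2.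
have dM0 := @dM_ge0 R XS YS M s.2 s'.2 M0.
move: hd; rewrite /dS !lt_min => /and3P [hM hLY heK].
set del := dM M s.2 s'.2 in dM0 hM hLY heK *.
have dMlt : del < M by lra.
set B := L * (L' * (LY * del) `^ p + D s.1 s'.1).
apply: (@le_lt_trans _ _ B).
  apply: inf_close.
  - exact: ne.
  - exact: ne.
  - by move=> _ [T0X [T0Y [hX hY ->]]]; exact: Cnn.
  - by move=> _ [T0X [T0Y [hX hY ->]]]; exact: Cnn.
  - move=> _ [T0X [T0Y [hX hY ->]]].
    eexists; first by exists T0X, T0Y; split.
    have := key _ _ Ss Ss' dMlt _ _ hX hY.
    rewrite -/B ler_norml => /andP [h1 h2]; lra.
  - move=> _ [T0X [T0Y [hX hY ->]]].
    eexists; first by exists T0X, T0Y; split.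
    have := key _ _ Ss Ss' dMlt _ _ hX hY.
    rewrite -/B ler_norml => /andP [h1 h2]; lra.
have LYd0 : 0 <= LY * del by apply: mulr_ge0 => //; exact: ltW.
have LYd1 : LY * del <= 1.
  have : del < LY^-1 by lra.
  rewrite -(ltr_pM2l LY0) mulfV ?gt_eqF //; exact: ltW.
have pw : (LY * del) `^ p <= LY * del.
  case: (eqVneq (LY * del) 0) => [->|nz].
    by rewrite powR0 ?gt_eqF.
  by apply: ge1r_powR => //; rewrite LYd1 andbT lt_neqAle eq_sym nz.
have hB : B <= K * (D s.1 s'.1 + del).
  rewrite /B /K -mulrA; apply: ler_wpM2l; first exact: ltW.
  have : L' * (LY * del) `^ p <= L' * (LY * del).
    by apply: ler_wpM2l => //; exact: ltW.
  have : 0 <= L' * LY * D s.1 s'.1 by apply: mulr_ge0 => //; apply: mulr_ge0; exact: ltW.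
  have : 0 <= L' * LY * del by apply: mulr_ge0 => //; apply: mulr_ge0; exact: ltW.
  rewrite !mulrA; nra.
apply: le_lt_trans hB _.
have : D s.1 s'.1 + del < e / K by [].
by rewrite -(ltr_pM2l K0) mulrCA mulfV ?gt_eqF // mulr1.
Qed.
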